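(* For every language $L$ that has a neutral letter, $Q^{\star}_L\mathrm{FO}\equiv Q^{1}_L\mathrm{FO}$, where in both logics the quantifier may bind relation variables of any arity $m\ge1$.
   Context: A letter $e$ is a neutral letter of $L\subseteq\Sigma^*$ if for all $u,v\in\Sigma^*$, $uv\in L\iff uev\in L$. Strings as structures: a nonempty string $b_0\cdots b_{n-1}$ over the ordered alphabet $(a_1,\dots,a_s)$ is the structure with universe $\{0,\dots,n-1\}$, natural order $<$, and unary predicates $P_{a_i}=\{j:b_j=a_i\}$. FO uses $=$, $<$, these predicates, $\min,\max$, connectives, $\exists,\forall$; no other built-in relations. $m$-ary second-order Lindström quantifiers: for $L$ over $(a_1,\dots,a_s)$ and distinct $m$-ary relation variables $\overline X=(X_1,\dots,X_k)$, over universe $\{0,\dots,n-1\}$ encode a relation $A_i\subseteq\{0,\dots,n-1\}^m$ by the bit string $s^i_0\cdots s^i_{n^m-1}$ with $s^i_j=1$ iff the $j$-th tuple of $\{0,\dots,n-1\}^m$ in lexicographic order is in $A_i$. For $Q^1_L$ the $2^{n^mk}$ assignments are ordered lexicographically by the interleaved code $s^1_0\cdots s^k_0s^1_1\cdots s^k_1\cdots$; for $Q^\star_L$ by the concatenated code $s^1_0\cdots s^1_{n^m-1}\cdots s^k_0\cdots s^k_{n^m-1}$. Then $\mathcal A\models Q\overline X[\varphi_1,\dots,\varphi_{s-1}]$ iff the word whose $i$-th letter is $a_j$ for the least $j$ with $\varphi_j$ true at the $i$-th assignment (and $a_s$ if none) lies in $L$. $Q^1_L\mathrm{FO}$ (resp.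 $Q^\star_L\mathrm{FO}$) consists of all formulas $Q^1_L\overline X[\varphi_1,\dots,\varphi_{s-1}]$ (resp. with $Q^\star_L$) with $\overline X$ a tuple of $m$-ary relation variables for some $m\ge1$ and $\varphi_i$ first-order formulas possibly containing $\overline X$. $\mathcal L\equiv\mathcal L'$ means over every string signature each sentence of either logic has an equivalent sentence of the other. *)

(* Defs.v *)
From mathcomp Require Import all_boot.
Set Implicit Arguments. Unset Strict Implicit. Unset Printing Implicit Defensive.

(** * Strings as structures.
    A string over the ordered alphabet (b_0,...,b_{t-1}) is [w : seq 'I_t];
    the structure has universe {0,...,size w - 1}. *)

Inductive term : Type :=
| TVar of nat
| TMin
| TMax.

Inductive fo (t : nat) : Type :=
| FEq of term & term
| FLt of term & term
| FP of 'I_t & term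
| FRel of nat & seq term
| FTrue
| FFalse
| FNot of fo t
| FAnd of fo t & fo t
| FOr of fo t & fo t
| FImp of fo t & fo t
| FIff of fo t & fo t
| FEx of nat & fo t
| FAll of nat & fo t.

Arguments FTrue {t}.
Arguments FFalse {t}.

Definition term_val (n : nat) (env : nat -> nat) (x : term) : nat :=
  match x with
  | TVar v => env v
  | TMin => 0
  | TMax => n.-1
  end.

Definition upd (env : nat -> nat) (v a : nat) : nat -> nat :=
  fun u => if u == v then a else env u.

Fixpoint eval (t : nat) (w : seq 'I_t) (env : nat -> nat)
    (R : nat -> seq nat -> bool) (phi : fo t) : bool :=
  let n := size w in
  match phi with
  | FEq x y => term_val n env x == term_val n env y
  | FLt x y => term_val n env x < term_val n env y
  | FP a x => nth None (map Some w) (term_val n env x) == Some a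
  | FRel X xs => R X (map (term_val n env) xs)
  | FTrue => true
  | FFalse => false
  | FNot p => ~~ eval w env R p
  | FAnd p q => eval w env R p && eval w env R q
  | FOr p q => eval w env R p || eval w env R q
  | FImp p q => eval w env R p ==> eval w env R q
  | FIff p q => eval w env R p == eval w env R q
  | FEx v p => has (fun a => eval w (upd env v a) R p) (iota 0 n)
  | FAll v p => all (fun a => eval w (upd env v a) R p) (iota 0 n)
  end.

Definition term_closed (bnd : seq nat) (x : term) : bool :=
  match x with TVar v => v \in bnd | _ => true end.

Fixpoint closed_in (t : nat) (bnd Xs : seq nat) (phi : fo t) : bool :=
  match phi with
  | FEq x y | FLt x y => term_closed bnd x && term_closed bnd y
  | FP _ x => term_closed bnd x
  | FRel X xs => (X \in Xs) && all (term_closed bnd) xs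
  | FTrue | FFalse => true
  | FNot p => closed_in bnd Xs p
  | FAnd p q | FOr p q | FImp p q | FIff p q =>
      closed_in bnd Xs p && closed_in bnd Xs q
  | FEx v p | FAll v p => closed_in (v :: bnd) Xs p
  end.

(** * Lindström quantifier sentences  Q X̄ [phi_1,...,phi_{s-1}]. *)
Record qsent (t : nat) : Type := QSent {
  q_arity : nat;
  q_vars : seq nat;
  q_phis : seq (fo t)
}.

Definition qsent_wf (s t : nat) (q : qsent t) : Prop :=
  [/\ 1 <= q_arity q, 0 < size (q_vars q), uniq (q_vars q),
      size (q_phis q) = s.-1 &
      all (closed_in [::] (q_vars q)) (q_phis q)].

(** The two orderings of the assignments. *)
Inductive qorder := Interleaved (* Q^1 *) | Concatenated (* Q^star *).

Definition tuple_index (n : nat) (tu : seq nat) : nat :=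
  foldl (fun acc x => acc * n + x) 0 tu.

(** Position in the code of bit s^i_j (relation i, tuple index j). *)
Definition code_pos (o : qorder) (n m k i j : nat) : nat :=
  match o with
  | Interleaved => j * k + i
  | Concatenated => i * n ^ m + j
  end.

(** Bit at position p (from the left) of the r-th bit string of length N
    in lexicographic order (0 < 1). *)
Definition lex_bit (N r p : nat) : bool := odd (r %/ 2 ^ (N.-1 - p)).

(** The relation assignment encoded by the r-th code. *)
Definition assign_of (o : qorder) (n m : nat) (Xs : seq nat) (r : nat)
    : nat -> seq nat -> bool :=
  let k := size Xs in
  let N := k * n ^ m in
  fun X tu =>
    (X \in Xs) && (size tu == m) && all (fun x => x < n) tu &&
    lex_bit N r (code_pos o n m k (index X Xs) (tuple_index n tu)).

Definition q_word (o : qorder) (t : nat) (q : qsent t) (w : seq 'I_t)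
    : seq nat :=
  let n := size w in
  let m := q_arity q in
  let Xs := q_vars q in
  let N := size Xs * n ^ m in
  [seq find (fun phi => eval w (fun _ => 0) (assign_of o n m Xs r) phi)
            (q_phis q) | r <- iota 0 (2 ^ N)].

Definition in_lang (s : nat) (L : seq 'I_s -> Prop) (ws : seq nat) : Prop :=
  exists u : seq 'I_s, map val u = ws /\ L u.

Definition qsat (o : qorder) (s : nat) (L : seq 'I_s -> Prop) (t : nat)
    (q : qsent t) (w : seq 'I_t) : Prop :=
  in_lang L (q_word o q w).

Definition neutral_letter (s : nat) (L : seq 'I_s -> Prop) (e : 'I_s) : Prop :=
  forall u v : seq 'I_s, L (u ++ v) <-> L (u ++ e :: v).

Definition simulates (o1 o2 : qorder) (s : nat) (L : seq 'I_s -> Prop) : Prop :=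
  forall (t : nat) (q : qsent t), qsent_wf s q ->
    exists q' : qsent t, qsent_wf s q' /\
      forall w : seq 'I_t, 0 < size w -> (qsat o1 L q w <-> qsat o2 L q' w).

Definition logic_equiv (o1 o2 : qorder) (s : nat) (L : seq 'I_s -> Prop)
    : Prop :=
  simulates o1 o2 L /\ simulates o2 o1 L.

(* Main.v *)
Require Import Defs.
From mathcomp Require Import all_boot zify.
Set Implicit Arguments. Unset Strict Implicit. Unset Printing Implicit Defensive.

Fixpoint allbits (N : nat) : seq (seq bool) :=
  if N is N'.+1 then map (cons false) (allbits N') ++ map (cons true) (allbits N')
  else [:: [::]].

Definition bitsof N r := mkseq (lex_bit N r) N.

Lemma allbits_size N c : c \in allbits N -> size c = N.
Proof.
elim: N c => [|N IH] c /=; first by rewrite inE => /eqP->.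
by rewrite mem_cat => /orP[] /mapP[c' /IH <- ->].
Qed.

Lemma mkseqS' (T : Type) (f : nat -> T) n : mkseq f n.+1 = f 0 :: mkseq (fun i => f i.+1) n.
Proof. by rewrite /mkseq /= (iotaDl 1 0) -map_comp; congr cons; apply: eq_map => i /=; rewrite add1n. Qed.

Lemma bits_allbits N : map (bitsof N) (iota 0 (2^N)) = allbits N.
Proof.
elim: N => [|N IH] //=.
rewrite expnS mul2n -addnn iotaD map_cat add0n -(addn0 (2^N)) iotaDl -!IH -!map_comp.
rewrite addn0; congr (_ ++ _); apply/eq_in_map => r; rewrite mem_iota => /andP[_ hr];
 rewrite /bitsof /= mkseqS' /lex_bit /=.
- rewrite subn0 divn_small //; congr cons; rewrite /mkseq; apply/eq_in_map => p; rewrite mem_iota => /andP[_ hp].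
  by congr (odd (r %/ 2 ^ _)); lia.
- rewrite subn0 divnDl // divnn expn_gt0 /= divn_small //; congr cons.
  rewrite /mkseq; apply/eq_in_map => p; rewrite mem_iota => /andP[_ hp].
  have -> : N - p.+1 = N.-1 - p by lia.
  have hd : 2 ^ (N.-1 - p) %| 2 ^ N by apply: dvdn_exp2l; lia.
  rewrite divnDl // oddD.
  have -> : 2 ^ N %/ 2 ^ (N.-1 - p) = 2 ^ p.+1.
    by rewrite -expnB //; [congr (2 ^ _); lia | lia].
  by rewrite oddX /=.
Qed.

Lemma ti_foldl n a tu :
  foldl (fun acc x => acc * n + x) a tu = a * n ^ size tu + tuple_index n tu.
Proof.
rewrite /tuple_index; elim: tu a => [|x tu IH] a /=; first by rewrite muln1 addn0.
rewrite IH [in RHS]IH expnS; lia.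
Qed.

Lemma ti_cons n x tu : tuple_index n (x :: tu) = x * n ^ size tu + tuple_index n tu.
Proof. by rewrite {1}/tuple_index /= ti_foldl. Qed.

Lemma ti_cat n tu1 tu2 :
  tuple_index n (tu1 ++ tu2) = tuple_index n tu1 * n ^ size tu2 + tuple_index n tu2.
Proof. by rewrite {1}/tuple_index foldl_cat ti_foldl. Qed.

Lemma ti_lt n tu : all (fun x => x < n) tu -> tuple_index n tu < n ^ size tu.
Proof.
elim: tu => [|x tu IH] /=; first by rewrite /tuple_index.
move=> /andP[hx /IH h]; rewrite ti_cons expnS.
have : x * n ^ size tu + tuple_index n tu < x.+1 * n ^ size tu by rewrite mulSn addnC ltn_add2r.
move=> h2; apply: (leq_trans h2); rewrite leq_mul2r hx orbT //.
Qed.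

Lemma cp_lt o n m k i j : i < k -> j < n ^ m -> code_pos o n m k i j < k * n ^ m.
Proof.
case: o => /= hi hj.
- have h1 : j * k + i < j.+1 * k by rewrite mulSn addnC ltn_add2r.
  apply: (leq_trans h1); rewrite mulnC leq_mul2l hj orbT //.
- have h1 : i * n ^ m + j < i.+1 * n ^ m by rewrite mulSn addnC ltn_add2r.
  apply: (leq_trans h1); rewrite leq_mul2r hi orbT //.
Qed.

Definition assignB (o : qorder) (n m : nat) (Xs : seq nat) (c : seq bool)
  : nat -> seq nat -> bool :=
  fun X tu => (X \in Xs) && (size tu == m) && all (fun x => x < n) tu &&
    nth false c (code_pos o n m (size Xs) (index X Xs) (tuple_index n tu)).

Lemma eval_ext t (w : seq 'I_t) R R' phi :
  (forall X tu, R X tu = R' X tu) -> forall env, eval w env R phi = eval w env R' phi.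
Proof.
move=> hR; elim: phi => //=; try (by move=> p IHp env; rewrite IHp);
  try (by move=> p IHp q IHq env; rewrite IHp IHq).
- by move=> v p IHp env; apply: eq_has => a; rewrite IHp.
- by move=> v p IHp env; apply: eq_all => a; rewrite IHp.
Qed.

Definition letter o t (q : qsent t) (w : seq 'I_t) (c : seq bool) : nat :=
  find (fun phi => eval w (fun _ => 0) (assignB o (size w) (q_arity q) (q_vars q) c) phi)
       (q_phis q).

Lemma q_wordE o t (q : qsent t) w :
  q_word o q w = map (letter o q w) (allbits (size (q_vars q) * size w ^ q_arity q)).
Proof.
rewrite -bits_allbits -map_comp /q_word; apply/eq_in_map => r _ /=.
rewrite /letter; apply: eq_find => phi; apply: eval_ext => X tu.
rewrite /assign_of /assignB; case hX: (X \in _) => //=; case: eqP => //= hs.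
case ha: all => //=.
rewrite /bitsof nth_mkseq //; apply: cp_lt; first by rewrite index_mem.
by rewrite -hs; apply: ti_lt.
Qed.

Definition spread (N' : nat) (S : seq nat) (b : seq bool) : seq bool :=
  mkseq (fun q => (q \in S) && nth false b (index q S)) N'.
Definition validS (S : seq nat) (c : seq bool) : bool :=
  all (fun q => nth false c q ==> (q \in S)) (iota 0 (size c)).

Lemma pos_pred S q : all (fun x => 0 < x) S ->
  ((q.+1 \in S) = (q \in map predn S)) * (index q.+1 S = index q (map predn S)).
Proof.
elim: S => [|x S IH] //= /andP[hx /IH [h1 h2]]; rewrite !inE h1 h2.
by case: x hx => // x _ /=.
Qed.

Lemma pos_0 S : all (fun x => 0 < x) S -> (0 \in S) = false.
Proof. by elim: S => //= x S IH /andP[hx /IH]; rewrite inE; case: x hx. Qed.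

Lemma iotaS0 n : iota 0 n.+1 = 0 :: map succn (iota 0 n).
Proof. by rewrite /= (iotaDl 1 0); congr cons; apply: eq_map => i; rewrite add1n. Qed.

Lemma validS_cons S x c :
  validS S (x :: c) = (x ==> (0 \in S)) && all (fun q => nth false c q ==> (q.+1 \in S)) (iota 0 (size c)).
Proof. by rewrite /validS [size _]/= iotaS0 /= all_map. Qed.

Lemma validS_pos S x c : all (fun x => 0 < x) S ->
  validS S (x :: c) = ~~ x && validS (map predn S) c.
Proof.
move=> hS; rewrite validS_cons pos_0 // implybF; congr andb.
by apply: eq_all => q; rewrite (pos_pred q hS).
Qed.

Lemma validS_0 S x c : all (fun x => 0 < x) S ->
  validS (0 :: S) (x :: c) = validS (map predn S) c.
Proof.
move=> hS; rewrite validS_cons inE eqxx implybT /=.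
by apply: eq_all => q; rewrite inE /= (pos_pred q hS).
Qed.

Lemma spread_pos N' S b : all (fun x => 0 < x) S ->
  spread N'.+1 S b = false :: spread N' (map predn S) b.
Proof.
move=> hS; rewrite /spread mkseqS' pos_0 //; congr cons.
by rewrite /mkseq; apply: eq_map => q; rewrite !(pos_pred q hS).
Qed.

Lemma spread_0 N' S x b : all (fun x => 0 < x) S ->
  spread N'.+1 (0 :: S) (x :: b) = x :: spread N' (map predn S) b.
Proof.
move=> hS; rewrite /spread mkseqS' inE eqxx /=; congr cons.
by rewrite /mkseq; apply: eq_map => q; rewrite !inE /= !(pos_pred q hS).
Qed.

Lemma sorted_pred S : all (fun x => 0 < x) S -> sorted ltn S -> sorted ltn (map predn S).
Proof.
move=> hS; apply: homo_sorted_in hS => a b ha hb /=; move: ha hb; rewrite -!topredE /=; lia.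
Qed.

Lemma split0 S : sorted ltn S ->
  all (fun y => 0 < y) S \/ exists2 S1, S = 0 :: S1 & all (fun y => 0 < y) S1.
Proof.
case: S => [|[|x] S] hs; [by left| right | left]; last first.
- by rewrite /= (sub_all _ (order_path_min ltn_trans hs)) //= => y; lia.
- by exists S => //; apply: (order_path_min ltn_trans hs).
Qed.

Lemma filter_pred0' T (p : pred T) s : (forall x, ~~ p x) -> filter p s = [::].
Proof. by move=> h; elim: s => //= x s ->; rewrite (negbTE (h x)). Qed.

Lemma filter_validS N' S : sorted ltn S -> all (fun x => x < N') S ->
  filter (validS S) (allbits N') = map (spread N' S) (allbits (size S)).
Proof.
elim: N' S => [|N' IH] S hs ha.
  case: S hs ha => [|x S] //= _ _; by rewrite /validS /spread.
rewrite /= filter_cat !filter_map.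
case: (split0 hs) => [hS | [S1 eS hS1]].
- rewrite (@filter_pred0' _ (preim (cons true) (validS S))); last first.
    by move=> c /=; rewrite validS_pos.
  rewrite cats0.
  have e : preim (cons false) (validS S) =1 validS (map predn S).
    by move=> c /=; rewrite validS_pos.
  rewrite (eq_filter e) IH ?size_map; first last.
  + rewrite all_map; apply/allP => y hy /=. move: (allP ha y hy) (allP hS y hy); lia.
  + exact: sorted_pred.
  rewrite -map_comp; apply: eq_map => b /=; by rewrite spread_pos.
- subst S.
  have e : forall y, preim (cons y) (validS (0 :: S1)) =1 validS (map predn S1).
    by move=> y c /=; rewrite validS_0.
  rewrite !(eq_filter (e _)) IH ?size_map; first last.
  + have ha1 : all (fun x => x < N'.+1) S1 by case/andP: ha.
    rewrite all_map; apply/allP => y hy /=.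
    move: (allP ha1 y hy) (allP hS1 y hy); lia.
  + by apply: sorted_pred => //; exact: (path_sorted hs).
  by rewrite [size _]/= /= map_cat -!map_comp; congr (_ ++ _); apply: eq_map => b /=; rewrite spread_0.
Qed.

Lemma spread_nth N' S b p : uniq S -> p < size S -> nth 0 S p < N' ->
  nth false (spread N' S b) (nth 0 S p) = nth false b p.
Proof.
move=> hu hp hN; rewrite /spread nth_mkseq // mem_nth //= index_uniq //.
Qed.

Lemma spread_size N' S b : size (spread N' S b) = N'.
Proof. by rewrite size_mkseq. Qed.

Lemma spread_valid N' S b : validS S (spread N' S b).
Proof.
apply/allP => q; rewrite mem_iota spread_size => hq.
by rewrite /spread nth_mkseq; [case: (q \in S) => //=; rewrite implybT | lia].
Qed.

Inductive ins (e : nat) : seq nat -> seq nat -> Prop :=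
| ins_nil : ins e [::] [::]
| ins_cons x u v : ins e u v -> ins e (x :: u) (x :: v)
| ins_e u v : ins e u v -> ins e u (e :: v).

Lemma ins_map e (F : seq bool -> nat) (P : pred (seq bool)) l :
  (forall c, c \in l -> ~~ P c -> F c = e) -> ins e (map F (filter P l)) (map F l).
Proof.
elim: l => [|c l IH] h /=; first by constructor.
have IH' : ins e (map F (filter P l)) (map F l).
  by apply: IH => c' hc'; apply: h; rewrite inE hc' orbT.
case hP: (P c) => /=; first by constructor.
rewrite (h c) ?inE ?eqxx ?hP //; by constructor.
Qed.

Lemma ins_lang_gen s (L : seq 'I_s -> Prop) (e : 'I_s) u v :
  neutral_letter L e -> ins (val e) u v -> forall p,
  (exists u', map val u' = u /\ L (p ++ u')) <-> (exists v', map val v' = v /\ L (p ++ v')).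
Proof.
move=> hn; elim => [|x u1 v1 _ IH|u1 v1 _ IH] p.
- by [].
- split.
  + case=> [[|y u'] [] //= [hy hu] hL].
    have [v' [hv hL']] : exists v', map val v' = v1 /\ L (rcons p y ++ v').
      by apply/IH; exists u'; rewrite cat_rcons.
    by exists (y :: v'); rewrite /= hv hy -cat_rcons.
  + case=> [[|y v'] [] //= [hy hv] hL].
    have [u' [hu hL']] : exists u', map val u' = u1 /\ L (rcons p y ++ u').
      by apply/IH; exists v'; rewrite cat_rcons.
    by exists (y :: u'); rewrite /= hu hy -cat_rcons.
- split.
  + move=> /IH [v' [hv hL]]; exists (e :: v'); rewrite /= hv; split => //.
    by apply: (proj1 (hn p v')).
  + case=> [[|y v'] [] //= [hy hv] hL].
    have ey : y = e by apply: val_inj.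
    subst y; apply/IH; exists v'; split => //; by apply: (proj2 (hn p v')).
Qed.

Lemma framework s (L : seq 'I_s -> Prop) (e : 'I_s) N N' S Fs Ft :
  neutral_letter L e -> sorted ltn S -> all (fun x => x < N') S -> size S = N ->
  (forall c, size c = N' -> ~~ validS S c -> Ft c = val e) ->
  (forall b, size b = N -> Ft (spread N' S b) = Fs b) ->
  in_lang L (map Fs (allbits N)) <-> in_lang L (map Ft (allbits N')).
Proof.
move=> hn hs ha hN h1 h2.
have hi : ins (val e) (map Ft (filter (validS S) (allbits N'))) (map Ft (allbits N')).
  by apply: ins_map => c hc; apply: h1; apply: allbits_size.
rewrite filter_validS // -map_comp hN in hi.
have -> : map Fs (allbits N) = map (Ft \o spread N' S) (allbits N).
  by apply/eq_in_map => b hb /=; rewrite h2 // (allbits_size hb).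
exact: (ins_lang_gen hn hi [::]).
Qed.

Fixpoint tuples (n m : nat) : seq (seq nat) :=
  if m is m'.+1 then flatten [seq [seq a :: z | z <- tuples n m'] | a <- iota 0 n]
  else [:: [::]].

Lemma mem_tuples n m z : (z \in tuples n m) = (size z == m) && all (fun x => x < n) z.
Proof.
elim: m z => [|m IH] z /=; first by rewrite inE; case: z.
apply/flattenP/idP.
- case=> _ /mapP[a ha ->] /mapP[z' hz' ->] /=; rewrite eqSS.
  move: hz'; rewrite IH => /andP[-> ->]; move: ha; rewrite mem_iota /=; lia.
- case: z => [|a z] //=; rewrite eqSS => /andP[hs /andP[ha hz]].
  exists [seq a :: z0 | z0 <- tuples n m]; first by apply/mapP; exists a => //; rewrite mem_iota.
  by apply/mapP; exists z => //; rewrite IH hs hz.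
Qed.

Lemma divmod_uniq P a r a' r' : r < P -> r' < P -> a * P + r = a' * P + r' -> a = a' /\ r = r'.
Proof.
move=> hr hr' e.
have hP : 0 < P by lia.
have h1 := congr1 (fun x => x %/ P) e; rewrite /= !divnMDl // !divn_small // !addn0 in h1.
by subst a'; split => //; lia.
Qed.

Lemma ti_inj n z1 z2 : all (fun x => x < n) z1 -> all (fun x => x < n) z2 ->
  size z1 = size z2 -> tuple_index n z1 = tuple_index n z2 -> z1 = z2.
Proof.
elim: z1 z2 => [|x z1 IH] [|y z2] //= /andP[hx h1] /andP[hy h2] [hs].
rewrite !ti_cons hs => e.
have h1' := ti_lt h1; rewrite hs in h1'.
have [exy e2] := divmod_uniq h1' (ti_lt h2) e.
by rewrite exy (IH z2).
Qed.

Lemma ti_surj n m q : q < n ^ m ->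
  exists2 z, z \in tuples n m & tuple_index n z = q.
Proof.
elim: m q => [|m IH] q hq.
  by exists [::] => //; move: hq; rewrite expn0; case: q.
have hP : 0 < n ^ m by move: hq; rewrite expnS; case: (n ^ m) => //; rewrite muln0.
have [z hz ez] := IH (q %% n ^ m) (ltn_pmod _ hP).
exists (q %/ n ^ m :: z).
- rewrite mem_tuples /=; move: hz; rewrite mem_tuples => /andP[/eqP -> ->].
  by rewrite eqxx ltn_divLR // -expnS hq.
- rewrite ti_cons ez; move: hz; rewrite mem_tuples => /andP[/eqP -> _].
  by rewrite -divn_eq.
Qed.

Lemma cp_inj o n m k i j i' j' : i < k -> j < n ^ m -> i' < k -> j' < n ^ m ->
  code_pos o n m k i j = code_pos o n m k i' j' -> i = i' /\ j = j'.
Proof.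
case: o => /= hi hj hi' hj' e.
- by have [] := divmod_uniq hi hi' e.
- by have [] := divmod_uniq hj hj' e.
Qed.

Lemma cp_surj o n m k q : q < k * n ^ m ->
  exists i j, [/\ i < k, j < n ^ m & code_pos o n m k i j = q].
Proof.
move=> hq.
have hk : 0 < k by move: hq; case: k.
have hP : 0 < n ^ m by move: hq; case: (n ^ m) => //; rewrite muln0.
case: o => /=.
- exists (q %% k), (q %/ k); split; first by rewrite ltn_pmod.
  + by rewrite ltn_divLR // mulnC.
  + by rewrite -divn_eq.
- exists (q %/ n ^ m), (q %% n ^ m); split; last by rewrite -divn_eq.
  + by rewrite ltn_divLR.
  + by rewrite ltn_pmod.
Qed.

Definition exs t (vs : seq nat) (phi : fo t) : fo t := foldr (@FEx t) phi vs.

Fixpoint upds (env : nat -> nat) (vs zs : seq nat) : nat -> nat :=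
  match vs, zs with
  | v :: vs', z :: zs' => upds (upd env v z) vs' zs'
  | _, _ => env
  end.

Lemma has_flatten' T (p : pred T) ss : has p (flatten ss) = has (has p) ss.
Proof. by elim: ss => //= s ss IH; rewrite has_cat IH. Qed.

Lemma eval_exs t (w : seq 'I_t) env R vs phi :
  eval w env R (exs vs phi) = has (fun z => eval w (upds env vs z) R phi) (tuples (size w) (size vs)).
Proof.
elim: vs env => [|v vs IH] env /=; first by rewrite orbF.
rewrite has_flatten' has_map; apply: eq_has => a /=.
by rewrite IH has_map.
Qed.

Lemma upds_val env vs zs u : uniq vs -> size zs = size vs ->
  upds env vs zs u = if u \in vs then nth 0 zs (index u vs) else env u.
Proof.
elim: vs zs env => [|v vs IH] [|z zs] env //= /andP[hv hu] [hs].
rewrite IH // inE /upd; case: (eqVneq u v) => [->|]; first by rewrite (negbTE hv) /= ?eqxx.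
by move=> huv /=; case: (u \in vs).
Qed.

Definition bor t (l : seq (fo t)) : fo t := foldr (@FOr t) FFalse l.
Definition band t (l : seq (fo t)) : fo t := foldr (@FAnd t) FTrue l.

Lemma eval_bor t (w : seq 'I_t) env R l : eval w env R (bor l) = has (eval w env R) l.
Proof. by elim: l => //= p l ->. Qed.
Lemma eval_band t (w : seq 'I_t) env R l : eval w env R (band l) = all (eval w env R) l.
Proof. by elim: l => //= p l ->. Qed.

Lemma closed_bor t bnd Xs (l : seq (fo t)) : all (closed_in bnd Xs) l -> closed_in bnd Xs (bor l).
Proof. by elim: l => //= p l IH /andP[-> /IH]. Qed.
Lemma closed_band t bnd Xs (l : seq (fo t)) : all (closed_in bnd Xs) l -> closed_in bnd Xs (band l).
Proof. by elim: l => //= p l IH /andP[-> /IH]. Qed.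
Lemma closed_exs t bnd Xs vs (phi : fo t) :
  closed_in (rev vs ++ bnd) Xs phi -> closed_in bnd Xs (exs vs phi).
Proof. by elim: vs bnd => //= v vs IH bnd h; apply: IH; move: h; rewrite rev_cons cat_rcons. Qed.

Fixpoint tr t (tau : nat -> seq term -> fo t) (phi : fo t) : fo t :=
  match phi with
  | FRel X xs => tau X xs
  | FNot p => FNot (tr tau p)
  | FAnd p q => FAnd (tr tau p) (tr tau q)
  | FOr p q => FOr (tr tau p) (tr tau q)
  | FImp p q => FImp (tr tau p) (tr tau q)
  | FIff p q => FIff (tr tau p) (tr tau q)
  | FEx v p => FEx v (tr tau p)
  | FAll v p => FAll v (tr tau p)
  | _ => phi
  end.

Lemma eval_tr t (w : seq 'I_t) R R' tau :
  (forall env X xs, eval w env R' (tau X xs) = R X (map (term_val (size w) env) xs)) ->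
  forall phi env, eval w env R' (tr tau phi) = eval w env R phi.
Proof.
move=> h; elim => //=; try (by move=> p IHp env; rewrite IHp);
  try (by move=> p IHp q IHq env; rewrite IHp IHq).
- by move=> v p IHp env; apply: eq_has => a; rewrite IHp.
- by move=> v p IHp env; apply: eq_all => a; rewrite IHp.
Qed.

Lemma closed_tr t Xs (tau : nat -> seq term -> fo t) :
  (forall bnd X xs, X \in Xs -> all (term_closed bnd) xs -> closed_in bnd Xs (tau X xs)) ->
  forall phi bnd, closed_in bnd Xs phi -> closed_in bnd Xs (tr tau phi).
Proof.
move=> h; elim => //=; try (by move=> p IHp bnd /IHp);
  try (by move=> p IHp q IHq bnd /andP[/IHp -> /IHq ->]).
- by move=> X xs bnd /andP[hX hxs]; apply: h.
- by move=> v p IHp bnd /IHp.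
- by move=> v p IHp bnd /IHp.
Qed.

Lemma find_iota (p : pred nat) a n e : a <= e <= a + n ->
  (forall l, a <= l < e -> ~~ p l) -> (e < a + n -> p e) -> find p (iota a n) = e - a.
Proof.
elim: n a => [|n IH] a he h1 h2 /=; first by lia.
case: (ltnP a e) => hae.
- rewrite (negbTE (h1 a _)); last by lia.
  rewrite IH; [lia | lia | move=> l hl; apply: h1; lia | move=> hl; apply: h2; lia].
- have ea : a = e by lia.
  subst a; by rewrite h2 ?subnn //; lia.
Qed.

Lemma find_nth T (x0 : T) (p : pred T) s :
  find p s = find (fun l => p (nth x0 s l)) (iota 0 (size s)).
Proof. by rewrite -{1}(mkseq_nth x0 s) /mkseq find_map. Qed.

Lemma index_iota0 u n : u < n -> index u (iota 0 n) = u.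
Proof.
move=> hu; have := index_uniq 0 (s := iota 0 n) (i := u); rewrite size_iota nth_iota //.
by rewrite add0n; apply => //; apply: iota_uniq.
Qed.

Section Gen.
Variables (t : nat) (o1 o2 : qorder) (q : qsent t) (m' : nat) (tau : nat -> seq term -> fo t)
  (good : nat -> fo t) (ev : nat).

Let Xs := q_vars q.
Let k := size Xs.

Definition Inv : fo t :=
  bor [seq exs (iota 0 m') (FAnd (FRel t (nth 0 Xs i) (map TVar (iota 0 m'))) (FNot (good i)))
      | i <- iota 0 k].

Definition phi' (l : nat) : fo t :=
  let p := tr tau (nth FTrue (q_phis q) l) in
  if l == ev then FOr Inv p else FAnd (FNot Inv) p.

Definition qnew : qsent t := QSent m' Xs (mkseq phi' (size (q_phis q))).

Lemma upds_iota n env z : size z = m' ->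
  map (term_val n (upds env (iota 0 m') z)) (map TVar (iota 0 m')) = z.
Proof.
move=> hz; rewrite -map_comp; rewrite -{2}(mkseq_nth 0 z) hz /mkseq.
apply/eq_in_map => u; rewrite mem_iota => hu /=.
by rewrite upds_val ?iota_uniq ?size_iota // mem_iota hu index_iota0.
Qed.


Lemma assignB_nth o n mm c i z : uniq Xs -> i < k -> z \in tuples n mm ->
  assignB o n mm Xs c (nth 0 Xs i) z = nth false c (code_pos o n mm k i (tuple_index n z)).
Proof.
move=> hu hi; rewrite mem_tuples => /andP[hs ha].
by rewrite /assignB mem_nth // hs ha /= index_uniq.
Qed.

Lemma eval_Inv (w : seq 'I_t) env c S :
  uniq Xs -> size c = k * size w ^ m' ->
  (forall env i z R, i < k -> z \in tuples (size w) m' ->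
     eval w (upds env (iota 0 m') z) R (good i) =
     (code_pos o2 (size w) m' k i (tuple_index (size w) z) \in S)) ->
  eval w env (assignB o2 (size w) m' Xs c) Inv = ~~ validS S c.
Proof.
move=> hu hc hg; rewrite /Inv eval_bor has_map.
apply/hasP/idP.
- case=> i; rewrite mem_iota add0n => /andP[_ hi] /=; rewrite eval_exs size_iota.
  case/hasP => z hz /= /andP[]; rewrite upds_iota; last by move: hz; rewrite mem_tuples => /andP[/eqP].
  rewrite assignB_nth // hg // => hcq hnS.
  have hlt : code_pos o2 (size w) m' k i (tuple_index (size w) z) < k * size w ^ m'.
    apply: cp_lt => //; move: hz; rewrite mem_tuples => /andP[/eqP h1 h2]; rewrite -h1; exact: ti_lt.
  apply/negP => /allP /(_ (code_pos o2 (size w) m' k i (tuple_index (size w) z))).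
  by rewrite mem_iota add0n hc hlt (negbTE hnS) hcq; move/(_ isT).
- case/allPn => qq; rewrite mem_iota add0n hc => /andP[_ hq].
  rewrite negb_imply => /andP[hcq hnS].
  have [i [j [hi hj ecp]]] := cp_surj o2 hq.
  have [z hz ez] := ti_surj hj.
  exists i; first by rewrite mem_iota.
  rewrite /= eval_exs size_iota; apply/hasP; exists z => //=.
  rewrite upds_iota; last by move: hz; rewrite mem_tuples => /andP[/eqP].
  by rewrite assignB_nth // hg // ez ecp hcq hnS.
Qed.

Lemma qnew_wf s : qsent_wf s q -> 0 < m' ->
  (forall i, closed_in (rev (iota 0 m')) Xs (good i)) ->
  (forall bnd X xs, X \in Xs -> all (term_closed bnd) xs -> closed_in bnd Xs (tau X xs)) ->
  qsent_wf s qnew.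
Proof.
case=> h1 h2 h3 h4 h5 hm hg ht; split => //=; first by rewrite size_mkseq.
have hInv : closed_in [::] Xs Inv.
  apply: closed_bor; rewrite all_map; apply/allP => i; rewrite mem_iota add0n => /andP[_ hi] /=.
  apply: closed_exs; rewrite cats0 /= hg andbT mem_nth //=.
  by rewrite all_map; apply/allP => v; rewrite mem_iota /= mem_rev mem_iota.
rewrite /mkseq all_map; apply/allP => l; rewrite mem_iota add0n => /andP[_ hl] /=.
have hp : closed_in [::] Xs (tr tau (nth FTrue (q_phis q) l)).
  by apply: closed_tr => //; move/(all_nthP FTrue): h5; apply.
by rewrite /phi'; case: (l == ev) => /=; rewrite hInv hp.
Qed.

Theorem gen_sim s (L : seq 'I_s -> Prop) (e : 'I_s) (w : seq 'I_t) (sig : nat -> nat) :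
  neutral_letter L e -> ev = val e -> qsent_wf s q ->
  let n := size w in let N := k * n ^ q_arity q in let N' := k * n ^ m' in
  let S := map sig (iota 0 N) in
  sorted ltn S -> all (fun x => x < N') S ->
  (forall env i z R, i < k -> z \in tuples n m' ->
     eval w (upds env (iota 0 m') z) R (good i) =
     (code_pos o2 n m' k i (tuple_index n z) \in S)) ->
  (forall b env X xs, size b = N ->
     eval w env (assignB o2 n m' Xs (spread N' S b)) (tau X xs) =
     assignB o1 n (q_arity q) Xs b X (map (term_val n env) xs)) ->
  qsat o1 L q w <-> qsat o2 L qnew w.
Proof.
move=> hn hev [_ _ hu hsz _] n N N' S hs ha hg htau.
rewrite /qsat !q_wordE /=.
apply: (framework hn hs ha) => //; first by rewrite size_map size_iota.
- move=> c hc hinv; rewrite /letter /= /mkseq find_map.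
  have hI : eval w (fun _ => 0) (assignB o2 (size w) m' Xs c) Inv by rewrite (eval_Inv (fun _ => 0) hu hc hg).
  have he : val e < s := ltn_ord e.
  have hsev : ev <= size (q_phis q) by rewrite hsz hev -subn1; lia.
  rewrite (@find_iota _ 0 _ ev) ?subn0 ?hev //.
  + by rewrite add0n -hev hsev.
  + move=> l /andP[_ hl] /=; rewrite /phi'; have -> : (l == ev) = false by apply/eqP; lia.
    by rewrite /= hI.
  + by move=> _ /=; rewrite /phi' -hev eqxx /= hI.
- move=> b hb; rewrite /letter /= /mkseq find_map (find_nth FTrue); apply: eq_find => l /=.
  have hI : eval w (fun _ => 0) (assignB o2 (size w) m' Xs (spread N' S b)) Inv = false.
    by rewrite (eval_Inv (fun _ => 0) hu (spread_size _ _ _) hg) spread_valid.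
  rewrite /phi'; case: (l == ev) => /=; rewrite hI /=;
    by rewrite (eval_tr (R := assignB o1 (size w) (q_arity q) Xs b)) // => env X xs; apply: htau.
Qed.

End Gen.

Definition cterms (k i : nat) : seq term := nseq (k - i) TMin ++ nseq i TMax.
Definition cvals (k n i : nat) : seq nat := nseq (k - i) 0 ++ nseq i n.-1.

Lemma tv_cterms n env k i : map (term_val n env) (cterms k i) = cvals k n i.
Proof. by rewrite /cterms /cvals map_cat !map_nseq. Qed.

Lemma tv_nth_cterms n env k i l :
  term_val n env (nth TMin (cterms k i) l) = nth 0 (cvals k n i) l.
Proof.
case: (ltnP l (size (cterms k i))) => hl.
- by rewrite -(tv_cterms n env) (nth_map TMin).
- by rewrite nth_default // -(tv_cterms n env) nth_default ?size_map.
Qed.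

Lemma size_cvals k n i : i <= k -> size (cvals k n i) = k.
Proof. by rewrite /cvals size_cat !size_nseq; lia. Qed.

Lemma ti_nseq0 n a : tuple_index n (nseq a 0) = 0.
Proof. by elim: a => //= a IH; rewrite ti_cons IH. Qed.

Lemma ti_nseqmax n i : 0 < n -> tuple_index n (nseq i n.-1) = n ^ i - 1.
Proof.
case: n => // n _; elim: i => //= i IH; rewrite ti_cons IH size_nseq expnS.
have := expn_gt0 n.+1 i; rewrite /= => hp.
rewrite mulSn; set P := n.+1 ^ i; lia.
Qed.

Lemma ti_cvals k n i : 0 < n -> tuple_index n (cvals k n i) = n ^ i - 1.
Proof. by move=> hn; rewrite /cvals ti_cat ti_nseq0 mul0n add0n ti_nseqmax. Qed.

Lemma cvals_tuples k n i : 0 < n -> i <= k -> cvals k n i \in tuples n k.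
Proof.
move=> hn hi; rewrite mem_tuples size_cvals // eqxx /= /cvals all_cat.
by rewrite !all_nseq hn orbT /= ltn_predL hn orbT.
Qed.

Lemma eval_eqs t (w : seq 'I_t) env R k i a :
  eval w env R (band [seq FEq t (TVar (a + l)) (nth TMin (cterms k i) l) | l <- iota 0 k]) =
  all (fun l => env (a + l) == nth 0 (cvals k (size w) i) l) (iota 0 k).
Proof. by rewrite eval_band all_map; apply: eq_all => l /=; rewrite tv_nth_cterms. Qed.

Lemma drop_eq_all (z v : seq nat) a k : size z = a + k -> size v = k ->
  (drop a z == v) = all (fun l => nth 0 z (a + l) == nth 0 v l) (iota 0 k).
Proof.
move=> hz hv; apply/eqP/allP.
- by move=> <- l _; rewrite nth_drop.
- move=> h; apply: (eq_from_nth (x0 := 0)); first by rewrite size_drop; lia.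
  move=> l; rewrite size_drop => hl; rewrite nth_drop; apply/eqP/h.
  rewrite mem_iota; lia.
Qed.

Lemma take_eq_all (z v : seq nat) k : k <= size z -> size v = k ->
  (take k z == v) = all (fun l => nth 0 z l == nth 0 v l) (iota 0 k).
Proof.
move=> hz hv; apply/eqP/allP.
- move=> <- l; rewrite mem_iota => hl; rewrite nth_take //; lia.
- move=> h; apply: (eq_from_nth (x0 := 0)); first by rewrite size_takel.
  move=> l; rewrite size_takel // => hl; rewrite nth_take; last by lia.
  apply/eqP/h; rewrite mem_iota; lia.
Qed.

Lemma upds_iota_at env m z l : size z = m -> l < m ->
  upds env (iota 0 m) z l = nth 0 z l.
Proof.
move=> hz hl; rewrite upds_val ?iota_uniq ?size_iota // mem_iota /= hl index_iota0 //.
Qed.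

Lemma lt_lex_k k A A' i i' : i < k -> (A < A' \/ (A = A' /\ i < i')) -> A * k + i < A' * k + i'.
Proof. move=> hi [h|[-> h]]; nia. Qed.

Definition sig1 n m k qq :=
  code_pos Interleaved n (m + k) k (qq %/ n ^ m) ((n ^ (qq %/ n ^ m) - 1) * n ^ m + qq %% n ^ m).

Lemma sig1E n m k i j : j < n ^ m ->
  sig1 n m k (i * n ^ m + j) = ((n ^ i - 1) * n ^ m + j) * k + i.
Proof.
move=> hj; have hP : 0 < n ^ m by lia.
by rewrite /sig1 /= divnMDl // divn_small // addn0 modnMDl modn_small.
Qed.

Lemma sig1_mono n m k qq qq' : 0 < n -> qq < qq' -> qq' < k * n ^ m ->
  sig1 n m k qq < sig1 n m k qq'.
Proof.
move=> hn hq hq'.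
set P := n ^ m. have hP : 0 < P by rewrite expn_gt0 hn.
rewrite (divn_eq qq P) (divn_eq qq' P) !sig1E ?ltn_pmod //.
set i := qq %/ P; set i' := qq' %/ P; set j := qq %% P; set j' := qq' %% P.
have hj : j < P by rewrite ltn_pmod. have hj' : j' < P by rewrite ltn_pmod.
have hi' : i' < k by rewrite ltn_divLR.
have hii : i <= i' by apply: leq_div2r; lia.
have hqe : qq = i * P + j by rewrite {1}(divn_eq qq P).
have hqe' : qq' = i' * P + j' by rewrite {1}(divn_eq qq' P).
apply: lt_lex_k; first by lia.
case: (ltnP i i') => hlt; last first.
- have ei : i = i' by lia.
  rewrite -ei; left; rewrite ltn_add2l; subst i; nia.
- case: (ltnP 1 n) => hn1.
  + left.
    have h1 : n ^ i < n ^ i' by rewrite ltn_exp2l.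
    have h2 : (n ^ i - 1) * P + j < n ^ i * P.
      have : n ^ i - 1 + 1 = n ^ i by have := expn_gt0 n i; lia.
      move=> e; rewrite -{2}e mulnDl mul1n ltn_add2l //.
    apply: (leq_trans h2); apply: leq_trans (leq_addr _ _); rewrite leq_mul2r; apply/orP; right; lia.
  + have n1 : n = 1 by lia.
    right; subst P; rewrite n1 !exp1n in hj hj' *; split => //; lia.
Qed.

Lemma A_lt n m k i j : 0 < n -> i < k -> j < n ^ m -> (n ^ i - 1) * n ^ m + j < n ^ (m + k).
Proof.
move=> hn hi hj.
have h2 : (n ^ i - 1) * n ^ m + j < n ^ i * n ^ m.
  have : n ^ i - 1 + 1 = n ^ i by have := expn_gt0 n i; lia.
  move=> e; rewrite -{2}e mulnDl mul1n ltn_add2l //.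
apply: (leq_trans h2); rewrite expnD mulnC leq_mul2l; apply/orP; right.
by apply: leq_pexp2l => //; lia.
Qed.

Lemma sig1_lt n m k qq : 0 < n -> qq < k * n ^ m -> sig1 n m k qq < k * n ^ (m + k).
Proof.
move=> hn hq; have hP : 0 < n ^ m by rewrite expn_gt0 hn.
rewrite /sig1; apply: cp_lt; first by rewrite ltn_divLR.
apply: A_lt => //; [by rewrite ltn_divLR | by rewrite ltn_pmod].
Qed.

Lemma good1_mem n m k i z : 0 < n -> i < k -> z \in tuples n (m + k) ->
  (take k z == cvals k n i) =
  (code_pos Interleaved n (m + k) k i (tuple_index n z) \in map (sig1 n m k) (iota 0 (k * n ^ m))).
Proof.
move=> hn hi; rewrite mem_tuples => /andP[/eqP hz hza].
have hP : 0 < n ^ m by rewrite expn_gt0 hn.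
set z1 := take k z; set z2 := drop k z.
have ez : z = z1 ++ z2 by rewrite cat_take_drop.
have hz1 : size z1 = k by rewrite size_takel; lia.
have hz2 : size z2 = m by rewrite size_drop; lia.
have ha1 : all (fun x => x < n) z1 by move: hza; rewrite ez all_cat => /andP[].
have ha2 : all (fun x => x < n) z2 by move: hza; rewrite ez all_cat => /andP[].
have hj2 : tuple_index n z2 < n ^ m by rewrite -hz2; apply: ti_lt.
have eti : tuple_index n z = tuple_index n z1 * n ^ m + tuple_index n z2 by rewrite ez ti_cat hz2.
apply/eqP/mapP.
- move=> e1; exists (i * n ^ m + tuple_index n z2).
  + rewrite mem_iota add0n.
    have : i * n ^ m + tuple_index n z2 < i.+1 * n ^ m by rewrite mulSn addnC ltn_add2r.
    move=> h; apply: (leq_trans h); rewrite leq_mul2r hi orbT //.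
  + by rewrite sig1E // /= eti e1 ti_cvals.
- case=> qq; rewrite mem_iota add0n => hq.
  rewrite /sig1 => e.
  have hi' : qq %/ n ^ m < k by rewrite ltn_divLR.
  have hA := A_lt hn hi' (ltn_pmod qq hP).
  have htz : tuple_index n z < n ^ (m + k) by rewrite -hz; apply: ti_lt.
  have [ei ej] := cp_inj hi' hA hi htz (esym e).
  rewrite eti ei in ej.
  have [e1 _] := divmod_uniq (ltn_pmod qq hP) hj2 ej.
  have := cvals_tuples hn (ltnW hi); rewrite mem_tuples => /andP[/eqP hcs hca].
  apply: (ti_inj (n := n)) => //; first by rewrite hcs hz1.
  by rewrite ti_cvals // -e1.
Qed.

Definition tau1 t (Xs : seq nat) (X : nat) (xs : seq term) : fo t :=
  if X \in Xs then FRel t X (cterms (size Xs) (index X Xs) ++ xs) else FFalse.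
Definition good1 t (k : nat) (i : nat) : fo t :=
  band [seq FEq t (TVar (0 + l)) (nth TMin (cterms k i) l) | l <- iota 0 k].

Lemma cterms_closed bnd k i l : term_closed bnd (nth TMin (cterms k i) l).
Proof. by rewrite /cterms nth_cat !nth_nseq; do !case: ifP. Qed.

Lemma cterms_all_closed bnd k i : all (term_closed bnd) (cterms k i).
Proof. by rewrite /cterms all_cat !all_nseq /= !orbT. Qed.

Lemma sim1 s (L : seq 'I_s -> Prop) (e : 'I_s) :
  neutral_letter L e -> simulates Concatenated Interleaved L.
Proof.
move=> hn t q hq.
set m := q_arity q; set Xs := q_vars q; set k := size Xs.
have hwf := hq; case: hwf => hm hk hu hsz hcl.
exists (qnew q (m + k) (tau1 t Xs) (good1 t k) (val e)); split.
- apply: qnew_wf => //; first by rewrite addn_gt0 hm.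
  + move=> i; apply: closed_band; rewrite all_map; apply/allP => l; rewrite mem_iota add0n => /andP[_ hl] /=.
    by rewrite cterms_closed mem_rev mem_iota add0n andbT; lia.
  + move=> bnd X xs hX hxs; rewrite /tau1 hX /= hX all_cat hxs andbT.
    exact: cterms_all_closed.
- move=> w hw.
  have hP : 0 < size w ^ m by rewrite expn_gt0 hw.
  apply: (gen_sim (sig := sig1 (size w) m k) hn (erefl _) hq).
  + apply: (homo_sorted_in (e := ltn) (P := fun x => x < k * size w ^ m)).
    * move=> a b ha hb /= hab; apply: sig1_mono => //; move: hb; rewrite -topredE.
    * by apply/allP => a; rewrite mem_iota add0n.
    * exact: iota_ltn_sorted.
  + rewrite all_map; apply/allP => a; rewrite mem_iota add0n /= => ha; exact: sig1_lt.
  + move=> env i z R hi hz.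
    rewrite /good1 eval_eqs -(good1_mem (m := m) hw hi hz).
    have := hz; rewrite mem_tuples => /andP[/eqP hzs _].
    rewrite take_eq_all ?size_cvals ?hzs //; last by lia.
    apply: eq_in_all => l; rewrite mem_iota add0n /= => hl.
    rewrite add0n.
    by rewrite upds_iota_at //; lia.
    by rewrite leq_addl.
  + move=> b env X xs hb; rewrite /tau1.
    case hX: (X \in Xs); last by rewrite /assignB hX.
    rewrite /= map_cat tv_cterms.
    set i := index X Xs; set tuv := map (term_val (size w) env) xs.
    have hi : i < k by rewrite index_mem.
    rewrite /assignB hX /= size_cat size_cvals // ?(ltnW hi) // all_cat.
    have := cvals_tuples (k := k) hw (ltnW hi); rewrite mem_tuples => /andP[_ ->] /=.
    have -> : (size Xs + size tuv == m + k) = (size tuv == m) by rewrite /k addnC eqn_add2r.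
    case: eqP => //= hs; case ha: all => //=.
    have hj : tuple_index (size w) tuv < size w ^ m by rewrite -hs; apply: ti_lt.
    set qq := i * size w ^ m + tuple_index (size w) tuv.
    have hqq : qq < k * size w ^ m.
      have : qq < i.+1 * size w ^ m by rewrite /qq mulSn addnC ltn_add2r.
      move=> h; apply: (leq_trans h); rewrite leq_mul2r hi orbT //.
    have hS : sorted ltn (map (sig1 (size w) m k) (iota 0 (k * size w ^ m))).
      apply: (homo_sorted_in (e := ltn) (P := fun x => x < k * size w ^ m)).
      * move=> a b' ha' hb' /= hab; apply: sig1_mono => //; move: hb'; rewrite -topredE.
      * by apply/allP => a; rewrite mem_iota add0n.
      * exact: iota_ltn_sorted.
    have := @spread_nth (k * size w ^ (m + k)) _ b qq (sorted_uniq ltn_trans ltnn hS).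
    rewrite size_map size_iota (nth_map 0) ?size_iota // nth_iota // add0n.
    move=> h; rewrite -h //; last by apply: sig1_lt.
    congr nth; rewrite /= ti_cat hs sig1E // ti_cvals //.
Qed.

Definition sig2 n k qq :=
  if n == 1 then qq %% k else (qq %/ k) * n ^ k + (n ^ (qq %% k) - 1).

Lemma sig2E n k j i : i < k -> sig2 n k (j * k + i) = if n == 1 then i else j * n ^ k + (n ^ i - 1).
Proof.
move=> hi; have hk : 0 < k by lia.
by rewrite /sig2 divnMDl // divn_small // addn0 modnMDl modn_small.
Qed.

Lemma ltB n i k : 0 < n -> i < k -> n ^ i - 1 < n ^ k.
Proof.
move=> hn hi; have : n ^ i <= n ^ k by apply: leq_pexp2l => //; lia.
have := expn_gt0 n i; rewrite hn /=; lia.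
Qed.

Lemma sig2_mono n m k qq qq' : 0 < n -> qq < qq' -> qq' < k * n ^ m ->
  sig2 n k qq < sig2 n k qq'.
Proof.
move=> hn hq hq'.
have hk : 0 < k by move: hq'; case: k.
rewrite (divn_eq qq k) (divn_eq qq' k) !sig2E ?ltn_pmod //.
set j := qq %/ k; set j' := qq' %/ k; set i := qq %% k; set i' := qq' %% k.
have hi : i < k by rewrite ltn_pmod. have hi' : i' < k by rewrite ltn_pmod.
have hjj : j <= j' by apply: leq_div2r; lia.
have hqe : qq = j * k + i by rewrite {1}(divn_eq qq k).
have hqe' : qq' = j' * k + i' by rewrite {1}(divn_eq qq' k).
case: eqP => hn1.
- subst n; move: hq'; rewrite exp1n muln1 => hq'.
  have : j = 0 by apply: divn_small; lia.
  have : j' = 0 by apply: divn_small; lia.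
  lia.
- have hn2 : 1 < n by lia.
  case: (ltnP j j') => hlt.
  + have h1 := ltB hn hi.
    have : j * n ^ k + (n ^ i - 1) < j.+1 * n ^ k by rewrite mulSn addnC ltn_add2r.
    move=> h; apply: (leq_trans h); apply: leq_trans (leq_addr _ _); rewrite leq_mul2r hlt orbT //.
  + have ej : j = j' by lia.
    rewrite ej ltn_add2l.
    have hii : i < i' by lia.
    have := ltn_exp2l i i' hn2; rewrite hii => h.
    have := expn_gt0 n i; rewrite hn /=; lia.
Qed.

Lemma sig2_lt n m k qq : 0 < n -> qq < k * n ^ m -> sig2 n k qq < k * n ^ (m + k).
Proof.
move=> hn hq.
have hk : 0 < k by move: hq; case: k.
have hP : 0 < n ^ m by rewrite expn_gt0 hn.
rewrite /sig2; case: eqP => hn1.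
- have : qq %% k < k by rewrite ltn_pmod.
  move=> h; apply: (leq_trans h); rewrite leq_pmulr // expn_gt0 hn //.
- have hj : qq %/ k < n ^ m by rewrite ltn_divLR // mulnC.
  have h1 := ltB hn (ltn_pmod qq hk).
  have : qq %/ k * n ^ k + (n ^ (qq %% k) - 1) < (qq %/ k).+1 * n ^ k by rewrite mulSn addnC ltn_add2r.
  move=> h; apply: (leq_trans h); apply: (@leq_trans (n ^ (m + k))); last by rewrite leq_pmull.
  by rewrite expnD leq_mul2r hj orbT.
Qed.

Lemma ti_one z : all (fun x => x < 1) z -> tuple_index 1 z = 0.
Proof. by move=> h; have := ti_lt h; rewrite exp1n; case: (tuple_index 1 z). Qed.

Lemma good2_mem n m k i' z : 0 < n -> i' < k -> z \in tuples n (m + k) ->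
  (n == 1) || ((i' == 0) && has (fun i => drop m z == cvals k n i) (iota 0 k)) =
  (code_pos Concatenated n (m + k) k i' (tuple_index n z) \in map (sig2 n k) (iota 0 (k * n ^ m))).
Proof.
move=> hn hi; rewrite mem_tuples => /andP[/eqP hz hza].
have hk : 0 < k by lia.
case: eqP => hn1 /=.
- subst n; rewrite ti_one // !exp1n !muln1 addn0; apply/esym/mapP; exists i'.
  + by rewrite mem_iota.
  + by rewrite /sig2 /= modn_small.
have hn2 : 1 < n by lia.
have hP : 0 < n ^ m by rewrite expn_gt0 hn.
set z1 := take m z; set z2 := drop m z.
have ez : z = z1 ++ z2 by rewrite cat_take_drop.
have hz1 : size z1 = m by rewrite size_takel; lia.
have hz2 : size z2 = k by rewrite size_drop; lia.
have ha1 : all (fun x => x < n) z1 by move: hza; rewrite ez all_cat => /andP[].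
have ha2 : all (fun x => x < n) z2 by move: hza; rewrite ez all_cat => /andP[].
have hj1 : tuple_index n z1 < n ^ m by rewrite -hz1; apply: ti_lt.
have hj2 : tuple_index n z2 < n ^ k by rewrite -hz2; apply: ti_lt.
have eti : tuple_index n z = tuple_index n z1 * n ^ k + tuple_index n z2 by rewrite ez ti_cat hz2.
apply/idP/mapP.
- case/andP => /eqP -> /hasP [i]; rewrite mem_iota add0n => /andP[_ hi2] /eqP e2.
  exists (tuple_index n z1 * k + i).
  + rewrite mem_iota add0n.
    have : tuple_index n z1 * k + i < (tuple_index n z1).+1 * k by rewrite mulSn addnC ltn_add2r.
    move=> h; apply: (leq_trans h); rewrite mulnC leq_mul2l hj1 orbT //.
  + rewrite sig2E // (negbTE (introN eqP hn1)) /= mul0n add0n eti e2 ti_cvals //.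
- case=> qq; rewrite mem_iota add0n => hq.
  rewrite (divn_eq qq k) sig2E ?ltn_pmod // (negbTE (introN eqP hn1)) /= => e.
  set j := qq %/ k in e; set i := qq %% k in e.
  have hi2 : i < k by rewrite ltn_pmod.
  have hj : j < n ^ m by rewrite ltn_divLR // mulnC.
  have hB := ltB hn hi2.
  have hJ : j * n ^ k + (n ^ i - 1) < n ^ (m + k).
    have : j * n ^ k + (n ^ i - 1) < j.+1 * n ^ k by rewrite mulSn addnC ltn_add2r.
    move=> h; apply: (leq_trans h); rewrite expnD leq_mul2r hj orbT //.
  have htz : tuple_index n z < n ^ (m + k) by rewrite -hz; apply: ti_lt.
  have [e0 e1] := divmod_uniq htz hJ (etrans e (esym (add0n _)) : _ = 0 * n ^ (m + k) + _).
  rewrite e0 eqxx /=; apply/hasP; exists i; first by rewrite mem_iota.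
  rewrite eti in e1.
  have [_ e3] := divmod_uniq hj2 hB e1.
  have := cvals_tuples (k := k) hn (ltnW hi2); rewrite mem_tuples => /andP[/eqP hcs hca].
  apply/eqP; apply: (ti_inj (n := n)) => //; first by rewrite hcs hz2.
  by rewrite ti_cvals.
Qed.

Definition tau2 t (Xs : seq nat) (X : nat) (xs : seq term) : fo t :=
  if X \in Xs then
    FOr (FAnd (FEq t TMin TMax) (FRel t X (xs ++ cterms (size Xs) (index X Xs))))
        (FAnd (FNot (FEq t TMin TMax)) (FRel t (nth 0 Xs 0) (xs ++ cterms (size Xs) (index X Xs))))
  else FFalse.

Definition good2 t (m k i' : nat) : fo t :=
  FOr (FEq t TMin TMax)
    (if i' == 0 then bor [seq band [seq FEq t (TVar (m + l)) (nth TMin (cterms k i) l) | l <- iota 0 k]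
                         | i <- iota 0 k]
     else FFalse).

Lemma eq_minmax n : 0 < n -> (0 == n.-1) = (n == 1).
Proof. by case: n => // [[|n]]. Qed.

Lemma sim2 s (L : seq 'I_s -> Prop) (e : 'I_s) :
  neutral_letter L e -> simulates Interleaved Concatenated L.
Proof.
move=> hn t q hq.
set m := q_arity q; set Xs := q_vars q; set k := size Xs.
have hwf := hq; case: hwf => hm hk hu hsz hcl.
exists (qnew q (m + k) (tau2 t Xs) (good2 t m k) (val e)); split.
- apply: qnew_wf => //; first by rewrite addn_gt0 hm.
  + move=> i /=; case: (i == 0) => //=.
    apply: closed_bor; rewrite all_map; apply/allP => i2 _ /=.
    apply: closed_band; rewrite all_map; apply/allP => l; rewrite mem_iota add0n => /andP[_ hl] /=.
    by rewrite cterms_closed mem_rev mem_iota add0n andbT /k; lia.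
  + move=> bnd X xs hX hxs; rewrite /tau2 hX /= hX mem_nth // !all_cat hxs /=.
    by rewrite !all_nseq /= !orbT.
- move=> w hw.
  have hP : 0 < size w ^ m by rewrite expn_gt0 hw.
  have hS : sorted ltn (map (sig2 (size w) k) (iota 0 (k * size w ^ m))).
    apply: (homo_sorted_in (e := ltn) (P := fun x => x < k * size w ^ m)).
    * move=> a b ha hb /= hab; apply: (sig2_mono (m := m)) => //; move: hb; rewrite -topredE.
    * by apply/allP => a; rewrite mem_iota add0n.
    * exact: iota_ltn_sorted.
  apply: (gen_sim (sig := sig2 (size w) k) hn (erefl _) hq) => //.
  + rewrite all_map; apply/allP => a; rewrite mem_iota add0n /= => ha; exact: sig2_lt.
  + move=> env i z R hi hz.
    rewrite -(good2_mem (m := m) hw hi hz) /good2 /= eq_minmax //; congr orb.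
    case: (i == 0) => //=; rewrite eval_bor has_map; apply: eq_in_has => i2.
    rewrite mem_iota add0n => /andP[_ hi2] /=.
    rewrite eval_eqs.
    have := hz; rewrite mem_tuples => /andP[/eqP hzs _].
    rewrite (drop_eq_all (k := k)) ?size_cvals ?hzs //; last by apply: ltnW.
    apply: eq_in_all => l; rewrite mem_iota add0n /= => hl.
    by rewrite upds_iota_at //; lia.
  + move=> b env X xs hb; rewrite /tau2.
    case hX: (X \in Xs); last by rewrite /assignB hX.
    rewrite /= !(map_cat _ xs) !(tv_cterms (size w) env) eq_minmax //.
    set i := index X Xs; set tuv := map (term_val (size w) env) xs.
    set n := size w.
    have hi : i < k by rewrite index_mem.
    set c := spread _ _ b.
    have hgen : forall X', X' \in Xs ->
      assignB Concatenated n (m + k) Xs c X' (tuv ++ cvals (size Xs) n i) =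
      (size tuv == m) && all (fun x => x < n) tuv &&
      nth false c (index X' Xs * n ^ (m + k) + (tuple_index n tuv * n ^ k + (n ^ i - 1))).
      move=> X' hX'; rewrite /assignB hX' /= size_cat size_cvals ?(ltnW hi) // eqn_add2r all_cat.
      have := cvals_tuples (k := k) hw (ltnW hi); rewrite mem_tuples => /andP[_ ->].
      by rewrite andbT ti_cat size_cvals ?(ltnW hi) // ti_cvals.
    have hX0 : nth 0 Xs 0 \in Xs by apply: mem_nth.
    have hi0 : index (nth 0 Xs 0) Xs = 0.
      by move: hk; rewrite /Xs; case: (q_vars q) => //= x l _; rewrite eqxx.
    rewrite !hgen // hi0 /assignB hX /= -/m -/n -/k.
    case hA: ((size tuv == m) && all (fun x => x < n) tuv) => /=; last by rewrite !andbF.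
    move/andP: hA => [/eqP hs ha].
    have hj : tuple_index n tuv < n ^ m by rewrite -hs; apply: ti_lt.
    set qq := tuple_index n tuv * k + i.
    have hqq : qq < k * n ^ m.
      have : qq < (tuple_index n tuv).+1 * k by rewrite /qq mulSn addnC ltn_add2r.
      move=> h; apply: (leq_trans h); rewrite mulnC leq_mul2l hj orbT //.
    have epos : (if n == 1 then i * n ^ (m + k) + (tuple_index n tuv * n ^ k + (n ^ i - 1))
                else 0 * n ^ (m + k) + (tuple_index n tuv * n ^ k + (n ^ i - 1))) = sig2 n k qq.
      rewrite /qq sig2E //; case: eqP => hn1 //.
      rewrite hn1 ti_one ?hn1 // -?hn1; last by move: ha; rewrite hn1.
      by rewrite hn1 !exp1n muln1 mul0n add0n subnn addn0.
    have := @spread_nth (k * n ^ (m + k)) _ b qq (sorted_uniq ltn_trans ltnn hS).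
    rewrite size_map size_iota (nth_map 0) ?size_iota // nth_iota // add0n.
    move=> h; rewrite -h //; last by apply: sig2_lt.
    rewrite -epos; case: eqP => _ //=; by rewrite ?andbF ?orbF.
Qed.

Theorem proposition2p9 (s : nat) (L : seq 'I_s -> Prop) :
  (exists e : 'I_s, neutral_letter L e) ->
  logic_equiv Concatenated Interleaved L.
Proof.
case=> e he; split; [exact: (sim1 he) | exact: (sim2 he)].
Qed.
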